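(* For every $X\in B(\mathcal H)^d$ there exists a unitary $u\in B(\mathcal H)$ such that for every $k\ge0$, $$u\big(\mathrm{span}\{e_1,\dots,e_{k+1}\}\big)\subset V_k^X\quad\text{and}\quad u^*\big(V_k^X\big)\subset\mathrm{span}\{e_1,\dots,e_{\alpha(k,d)}\}.$$ That is, every $X\in B(\mathcal H)^d$ has a shift form.
   Context: $\mathcal H$ is an infinite-dimensional separable complex Hilbert space with a fixed orthonormal basis $e_1,e_2,\dots$, and $M\in B(\mathcal H)$ is the shift $Me_j=e_{j+1}$. For $X=(X^1,\dots,X^d)\in B(\mathcal H)^d$, $(X,M)$ denotes the $(d+1)$-tuple $(X^1,\dots,X^d,M)$. $\mathcal P(k,d)$ is the complex vector space of polynomials in $d+1$ noncommuting variables of degree at most $k$, and $\alpha(k,d)=\dim\mathcal P(k,d)$. For $k\ge0$, $V_k^X:=\{p(X,M)e_1: p\in\mathcal P(k,d)\}\subset\mathcal H$. A shift form of $X$ is a tuple $\widetilde X=u^*Xu=(u^*X^1u,\dots,u^*X^du)$ where $u$ is a unitary satisfying the two displayed inclusions for all $k\ge0$. *)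

(* Defs.v *)
(* classical reals. H is modelled concretely as l^2(N, C),
   with e_{j+1} the j-th standard unit vector (0-indexed). *)
From Stdlib Require Import Reals List Arith.
Open Scope R_scope.

Definition C : Type := (R * R)%type.
Definition C0 : C := (0, 0).
Definition C1 : C := (1, 0).
Definition Cadd (a b : C) : C := (fst a + fst b, snd a + snd b).
Definition Cmul (a b : C) : C :=
  (fst a * fst b - snd a * snd b, fst a * snd b + snd a * fst b).
Definition Cconj (a : C) : C := (fst a, - snd a).
Definition Cnorm2 (a : C) : R := fst a * fst a + snd a * snd a.

Definition Csum (f : nat -> C) (z : C) : Prop :=
  infinite_sum (fun n => fst (f n)) (fst z) /\
  infinite_sum (fun n => snd (f n)) (snd z).

Definition vec : Type := nat -> C.
Definition op : Type := vec -> vec.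

Definition norm2_sum (x : vec) (s : R) : Prop :=
  infinite_sum (fun n => Cnorm2 (x n)) s.
Definition in_H (x : vec) : Prop := exists s, norm2_sum x s.

Definition inner (x y : vec) (z : C) : Prop :=
  Csum (fun n => Cmul (x n) (Cconj (y n))) z.

Definition bounded_op (T : op) : Prop :=
  (forall x, in_H x -> in_H (T x)) /\
  (forall (a : C) x y, in_H x -> in_H y ->
     forall n, T (fun m => Cadd (Cmul a (x m)) (y m)) n
               = Cadd (Cmul a (T x n)) (T y n)) /\
  (exists K : R, forall x s t, in_H x -> norm2_sum x s ->
      norm2_sum (T x) t -> t <= K * s).

Definition adjoint (T S : op) : Prop :=
  bounded_op T /\ bounded_op S /\
  forall x y z, in_H x -> in_H y -> (inner (T x) y z <-> inner x (S y) z).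

Definition unitary (u us : op) : Prop :=
  adjoint u us /\
  (forall x, in_H x -> forall n, u (us x) n = x n) /\
  (forall x, in_H x -> forall n, us (u x) n = x n).

Definition e1 : vec := fun n => if Nat.eqb n 0 then C1 else C0.
Definition Mshift : op := fun x n =>
  match n with O => C0 | S m => x m end.

Definition in_span_e (m : nat) (x : vec) : Prop :=
  forall n, (m <= n)%nat -> x n = C0.

(** Evaluation of the noncommutative monomial (word) w in the d+1 variables
    (X^1,...,X^d,M) at v: letter i < d stands for X^(i+1) (= X i), letter d
    for M; the word [a1;...;an] denotes Y_{a1} Y_{a2} ... Y_{an}. *)
Definition weval (d : nat) (X : nat -> op) (w : list nat) (v : vec) : vec :=
  fold_right (fun a acc => (if Nat.ltb a d then X a else Mshift) acc) v w.

Definition poly_in (k d : nat) (p : list (C * list nat)) : Prop :=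
  Forall (fun cw => (length (snd cw) <= k)%nat /\
                    Forall (fun a => (a <= d)%nat) (snd cw)) p.

Definition peval (d : nat) (X : nat -> op) (p : list (C * list nat)) (v : vec)
  : vec := fun n =>
  fold_right (fun cw acc => Cadd (Cmul (fst cw) (weval d X (snd cw) v n)) acc)
             C0 p.

Definition in_Vk (d : nat) (X : nat -> op) (k : nat) (v : vec) : Prop :=
  exists p, poly_in k d p /\ forall n, v n = peval d X p e1 n.

(** alpha(k,d) = dim P(k,d) = sum_{j=0}^k (d+1)^j. *)
Fixpoint alpha (k d : nat) : nat :=
  match k with
  | O => 1
  | S k' => alpha k' d + Nat.pow (S d) (S k')
  end.

(* Main.v *)
Require Import Defs.
From Stdlib Require Import Reals List Arith.
From Stdlib Require Import Lia Lra Psatz FunctionalExtensionality.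
From Coquelicot Require Import Rcomplements Rbar Hierarchy Lim_seq Series.
Import Defs.
Import ListNotations.
Open Scope R_scope.


Definition Copp (a : C) : C := (- fst a, - snd a).
Definition Csub (a b : C) : C := Cadd a (Copp b).

Lemma C_ring : ring_theory C0 C1 Cadd Cmul Csub Copp (@eq C).
Proof.
  constructor; intros; repeat match goal with a : C |- _ => destruct a end;
  unfold Csub, Cadd, Cmul, Copp, C0, C1; simpl; f_equal; ring.
Qed.
Add Ring Cring : C_ring.


Lemma Ceq (a b : C) : fst a = fst b -> snd a = snd b -> a = b.
Proof. destruct a, b; simpl; intros; subst; auto. Qed.

Ltac Csimpl := repeat match goal with a : C |- _ => destruct a end;
  unfold Csub, Cadd, Cmul, Copp, Cconj, Cnorm2, C0, C1 in *; simpl in *.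

Definition Creal (r : R) : C := (r, 0).
Definition Ci : C := (0, 1).

Lemma Cnorm2_nonneg a : 0 <= Cnorm2 a.
Proof. Csimpl. nra. Qed.

Lemma Cmul_conj a : Cmul a (Cconj a) = Creal (Cnorm2 a).
Proof. apply Ceq; Csimpl; ring. Qed.

Lemma Cconj_add a b : Cconj (Cadd a b) = Cadd (Cconj a) (Cconj b).
Proof. apply Ceq; Csimpl; ring. Qed.
Lemma Cconj_mul a b : Cconj (Cmul a b) = Cmul (Cconj a) (Cconj b).
Proof. apply Ceq; Csimpl; ring. Qed.
Lemma Cconj_conj a : Cconj (Cconj a) = a.
Proof. apply Ceq; Csimpl; ring. Qed.
Lemma Cconj_0 : Cconj C0 = C0.
Proof. apply Ceq; Csimpl; ring. Qed.
Lemma Cconj_1 : Cconj C1 = C1.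
Proof. apply Ceq; Csimpl; ring. Qed.
Lemma Cconj_real r : Cconj (Creal r) = Creal r.
Proof. apply Ceq; unfold Creal, Cconj; simpl; ring. Qed.
Lemma Cnorm2_mul a b : Cnorm2 (Cmul a b) = Cnorm2 a * Cnorm2 b.
Proof. Csimpl. ring. Qed.
Lemma Cnorm2_conj a : Cnorm2 (Cconj a) = Cnorm2 a.
Proof. Csimpl. ring. Qed.
Lemma Cnorm2_eq0 a : Cnorm2 a = 0 -> a = C0.
Proof. intro H. apply Ceq; Csimpl; nra. Qed.
Lemma Cnorm2_0 : Cnorm2 C0 = 0.
Proof. Csimpl; ring. Qed.
Lemma Cnorm2_add_le a b : Cnorm2 (Cadd a b) <= 2 * Cnorm2 a + 2 * Cnorm2 b.
Proof. Csimpl. pose proof (Rle_0_sqr (r - r1)); pose proof (Rle_0_sqr (r0 - r2)); unfold Rsqr in *; nra. Qed.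
Lemma Cmul_real_fst r a : fst (Cmul (Creal r) a) = r * fst a.
Proof. unfold Cmul, Creal; simpl; ring. Qed.
Lemma Creal_mul r s : Cmul (Creal r) (Creal s) = Creal (r * s).
Proof. apply Ceq; unfold Cmul, Creal; simpl; ring. Qed.

Definition nsq (x : vec) : nat -> R := fun n => Cnorm2 (x n).
Definition N2 (x : vec) : R := Series (nsq x).
Definition ipre (x y : vec) n := fst (Cmul (x n) (Cconj (y n))).
Definition ipim (x y : vec) n := snd (Cmul (x n) (Cconj (y n))).
Definition ip (x y : vec) : C := (Series (ipre x y), Series (ipim x y)).

Lemma inH_iff x : in_H x <-> ex_series (nsq x).
Proof.
  unfold in_H, norm2_sum; split; intros [s Hs]; exists s; apply is_series_Reals; auto.
Qed.

Lemma ex_series_bound (a b : nat -> R) :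
  (forall n, Rabs (a n) <= b n) -> ex_series b -> ex_series a.
Proof. intros H Hb. apply (ex_series_le a b); auto. Qed.

Lemma is_series_lin (a b : nat -> R) (c la lb : R) :
  is_series a la -> is_series b lb -> is_series (fun n => c * a n + b n) (c * la + lb).
Proof.
  intros Ha Hb. apply (is_series_plus (fun n => c * a n) b).
  apply (is_series_scal_l c a la Ha). exact Hb.
Qed.

Lemma Series_lin (a b : nat -> R) (c : R) :
  ex_series a -> ex_series b -> Series (fun n => c * a n + b n) = c * Series a + Series b.
Proof.
  intros Ha Hb. apply is_series_unique. apply is_series_lin; apply Series_correct; auto.
Qed.

Lemma ex_series_scal_r (a : nat -> R) (c : R) : ex_series a -> ex_series (fun n => c * a n).
Proof. intros [l H]. exists (c * l). apply (is_series_scal_l c a l H). Qed.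

Lemma ex_series_lin (a b : nat -> R) (c : R) :
  ex_series a -> ex_series b -> ex_series (fun n => c * a n + b n).
Proof.
  intros [la Ha] [lb Hb]. exists (c * la + lb). apply is_series_lin; auto.
Qed.

Fixpoint fsum (m : nat) (a : nat -> R) : R :=
  match m with O => 0 | S m' => fsum m' a + a m' end.

Lemma sum_n_fsum (a : nat -> R) N : sum_n a N = fsum (S N) a.
Proof.
  induction N; simpl.
  - rewrite sum_O. ring.
  - rewrite sum_Sn, IHN. simpl. unfold plus; simpl. ring.
Qed.

Lemma fsum_ext m a b : (forall n, (n < m)%nat -> a n = b n) -> fsum m a = fsum m b.
Proof. induction m; simpl; intros; auto. rewrite IHm, H; auto. Qed.

Lemma fsum_nonneg m a : (forall n, 0 <= a n) -> 0 <= fsum m a.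
Proof. induction m; simpl; intros; try lra. specialize (IHm H). specialize (H m). lra. Qed.

Lemma fsum_mono m m' a : (forall n, 0 <= a n) -> (m <= m')%nat -> fsum m a <= fsum m' a.
Proof.
  intros H Hm. induction Hm; try lra. simpl. specialize (H m0). lra.
Qed.

Lemma fsum_stable m m' a : (forall n, (m <= n)%nat -> a n = 0) -> (m <= m')%nat ->
  fsum m' a = fsum m a.
Proof.
  intros H Hm. induction Hm as [|p Hp IH]; auto. simpl. rewrite IH, H; try lia. ring.
Qed.

Lemma fsum_plus m a b : fsum m (fun n => a n + b n) = fsum m a + fsum m b.
Proof. induction m; simpl; try ring. rewrite IHm. ring. Qed.
Lemma fsum_scal m c a : fsum m (fun n => c * a n) = c * fsum m a.
Proof. induction m; simpl; try ring. rewrite IHm. ring. Qed.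
Lemma fsum_swap m k (a : nat -> nat -> R) :
  fsum m (fun i => fsum k (fun j => a i j)) = fsum k (fun j => fsum m (fun i => a i j)).
Proof.
  induction m; simpl.
  - induction k; simpl; auto. rewrite <- IHk. ring.
  - rewrite IHm, fsum_plus. reflexivity.
Qed.
Lemma fsum_le m a b : (forall n, (n < m)%nat -> a n <= b n) -> fsum m a <= fsum m b.
Proof. induction m; simpl; intros; try lra. pose proof (H m). pose proof (IHm (fun n h => H n ltac:(lia))). assert (a m <= b m) by (apply H; lia). lra. Qed.

Lemma is_series_finite (a : nat -> R) m :
  (forall n, (m <= n)%nat -> a n = 0) -> is_series a (fsum m a).
Proof.
  intros H. cut (is_lim_seq (sum_n a) (fsum m a)); [intro Hc; exact Hc|].
  apply (is_lim_seq_ext_loc (fun _ => fsum m a)).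
  - exists m. intros N HN. rewrite sum_n_fsum. symmetry. apply fsum_stable; auto.
  - apply is_lim_seq_const.
Qed.

Lemma psum_le_series (a : nat -> R) m : (forall n, 0 <= a n) -> ex_series a -> fsum m a <= Series a.
Proof.
  intros Hp He.
  assert (HS : forall k, fsum (S k) a <= Series a).
  { intro k. rewrite <- sum_n_fsum. apply (is_lim_seq_incr_compare (sum_n a)).
    apply Series_correct; auto.
    intros j. rewrite !sum_n_fsum. simpl. specialize (Hp (S j)). lra. }
  destruct m. simpl. specialize (HS 0%nat). simpl in HS. specialize (Hp 0%nat). lra.
  apply HS.
Qed.

Lemma series_le_bound (a : nat -> R) M : ex_series a -> (forall m, fsum m a <= M) -> Series a <= M.
Proof.
  intros He Hb. 
  assert (H := Series_correct a He).
  assert (Hl := is_lim_seq_le (sum_n a) (fun _ => M) (Series a) M).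
  simpl in Hl. apply Hl; auto.
  - intros n. rewrite sum_n_fsum. apply Hb.
  - apply is_lim_seq_const.
Qed.

Lemma ex_series_bounded (a : nat -> R) M : (forall n, 0 <= a n) -> (forall m, fsum m a <= M) -> ex_series a.
Proof.
  intros Hp Hb.
  destruct (ex_finite_lim_seq_incr (sum_n a) M) as [l Hl].
  - intros n. rewrite !sum_n_fsum. simpl. specialize (Hp (S n)). lra.
  - intros n. rewrite sum_n_fsum. apply Hb.
  - exists l. exact Hl.
Qed.

Lemma series_tail (a : nat -> R) (eps : R) : ex_series a -> 0 < eps ->
  exists m, forall m', (m <= m')%nat -> Rabs (Series a - fsum m' a) < eps.
Proof.
  intros He Heps. assert (H := Series_correct a He).
  assert (H' : is_lim_seq (sum_n a) (Series a)) by exact H.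
  apply is_lim_seq_spec in H'. destruct (H' (mkposreal eps Heps)) as [N HN].
  exists (S N). intros m' Hm. destruct m' as [|m']; try lia.
  rewrite <- sum_n_fsum. rewrite Rabs_minus_sym. apply HN. lia.
Qed.

Definition inH (x : vec) := ex_series (nsq x).
Definition vlin (a : C) (x y : vec) : vec := fun n => Cadd (Cmul a (x n)) (y n).
Definition zerov : vec := fun _ => C0.

Lemma nsq_nonneg x n : 0 <= nsq x n.
Proof. apply Cnorm2_nonneg. Qed.

Lemma inH_zero : inH zerov.
Proof. exists 0. unfold nsq, zerov. replace 0 with (fsum 0 (fun n => Cnorm2 C0)) by reflexivity.
  apply is_series_finite. intros. rewrite Cnorm2_0; auto. Qed.

Lemma inH_lin a x y : inH x -> inH y -> inH (vlin a x y).
Proof.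
  intros Hx Hy. unfold inH.
  apply (ex_series_bound _ (fun n => (2 * Cnorm2 a) * nsq x n + 2 * nsq y n)).
  - intros n. rewrite Rabs_pos_eq by apply nsq_nonneg. unfold nsq, vlin.
    eapply Rle_trans. apply Cnorm2_add_le. rewrite Cnorm2_mul. lra.
  - apply ex_series_lin; auto. apply ex_series_scal_r; auto.
Qed.

Lemma ex_ipre x y : inH x -> inH y -> ex_series (ipre x y).
Proof.
  intros Hx Hy. apply (ex_series_bound _ (fun n => /2 * nsq x n + /2 * nsq y n)).
  - intros n. unfold ipre, nsq. destruct (x n) as [a b], (y n) as [c d].
    unfold Cmul, Cconj, Cnorm2; simpl. apply Rabs_le.
    pose proof (Rle_0_sqr (a - c)); pose proof (Rle_0_sqr (b - d));
    pose proof (Rle_0_sqr (a + c)); pose proof (Rle_0_sqr (b + d)); unfold Rsqr in *. split; nra.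
  - apply ex_series_lin; auto. apply ex_series_scal_r; auto.
Qed.

Lemma ex_ipim x y : inH x -> inH y -> ex_series (ipim x y).
Proof.
  intros Hx Hy. apply (ex_series_bound _ (fun n => /2 * nsq x n + /2 * nsq y n)).
  - intros n. unfold ipim, nsq. destruct (x n) as [a b], (y n) as [c d].
    unfold Cmul, Cconj, Cnorm2; simpl. apply Rabs_le.
    pose proof (Rle_0_sqr (a - d)); pose proof (Rle_0_sqr (b - c));
    pose proof (Rle_0_sqr (a + d)); pose proof (Rle_0_sqr (b + c)); unfold Rsqr in *. split; nra.
  - apply ex_series_lin; auto. apply ex_series_scal_r; auto.
Qed.

Lemma ip_inner x y : inH x -> inH y -> inner x y (ip x y).
Proof.
  intros Hx Hy. split; simpl; apply is_series_Reals; apply Series_correct;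
  [apply ex_ipre | apply ex_ipim]; auto.
Qed.

Lemma inner_unique x y z : inner x y z -> z = ip x y.
Proof.
  intros [H1 H2]. apply is_series_Reals in H1. apply is_series_Reals in H2.
  apply Ceq; simpl; symmetry; apply is_series_unique; auto.
Qed.

Lemma ip_lin_l a x w y : inH x -> inH w -> inH y ->
  ip (vlin a x w) y = Cadd (Cmul a (ip x y)) (ip w y).
Proof.
  intros Hx Hw Hy. destruct a as [a1 a2]. apply Ceq; simpl.
  - rewrite (Series_ext _ (fun n => a1 * ipre x y n + ((- a2) * ipim x y n + ipre w y n))).
    rewrite Series_lin, Series_lin; auto using ex_ipre, ex_ipim. ring.
    apply ex_series_lin; auto using ex_ipre, ex_ipim.
    intros n. unfold ipre, ipim, vlin. destruct (x n), (w n), (y n). unfold Cmul, Cconj, Cadd; simpl. ring.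
  - rewrite (Series_ext _ (fun n => a1 * ipim x y n + (a2 * ipre x y n + ipim w y n))).
    rewrite Series_lin, Series_lin; auto using ex_ipre, ex_ipim. ring.
    apply ex_series_lin; auto using ex_ipre, ex_ipim.
    intros n. unfold ipre, ipim, vlin. destruct (x n), (w n), (y n). unfold Cmul, Cconj, Cadd; simpl. ring.
Qed.

Lemma ip_conj x y : ip y x = Cconj (ip x y).
Proof.
  apply Ceq; simpl.
  - apply Series_ext. intros n; unfold ipre; destruct (x n), (y n); unfold Cmul, Cconj; simpl; ring.
  - rewrite <- Series_opp. apply Series_ext. intros n; unfold ipim; destruct (x n), (y n); unfold Cmul, Cconj; simpl; ring.
Qed.

Lemma Series_zero : Series (fun _ => 0) = 0.
Proof. apply is_series_unique. exact (is_series_finite (fun _ => 0) 0%nat (fun _ _ => eq_refl)). Qed.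

Lemma ip_self x : ip x x = Creal (N2 x).
Proof.
  apply Ceq; simpl.
  - apply Series_ext. intros n; unfold ipre, nsq; destruct (x n); unfold Cmul, Cconj, Cnorm2; simpl; ring.
  - rewrite <- Series_zero. apply Series_ext. intros n; unfold ipim; destruct (x n); unfold Cmul, Cconj, Cnorm2; simpl; ring.
Qed.

Lemma N2_nonneg x : inH x -> 0 <= N2 x.
Proof. intros H. apply (Rle_trans _ (fsum 0 (nsq x))). simpl; lra. apply psum_le_series; auto. apply nsq_nonneg. Qed.

Lemma N2_zero x : inH x -> N2 x = 0 -> forall n, x n = C0.
Proof.
  intros H H0 n. apply Cnorm2_eq0.
  assert (fsum (S n) (nsq x) <= N2 x) by (apply psum_le_series; auto; apply nsq_nonneg).
  simpl in H1. assert (0 <= fsum n (nsq x)) by (apply fsum_nonneg; apply nsq_nonneg).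
  pose proof (Cnorm2_nonneg (x n)). unfold nsq in *. lra.
Qed.

Lemma ip_zero_r x y : inH y -> N2 y = 0 -> ip x y = C0.
Proof.
  intros H H0. pose proof (N2_zero y H H0) as Hz. apply Ceq; simpl; rewrite <- Series_zero; apply Series_ext;
  intros n; unfold ipre, ipim; rewrite Hz; unfold Cmul, Cconj, C0; simpl; ring.
Qed.

Lemma N2_expand a b t : inH a -> inH b ->
  N2 (vlin t b a) = N2 a + 2 * fst (Cmul (Cconj t) (ip a b)) + Cnorm2 t * N2 b.
Proof.
  intros Ha Hb. destruct t as [t1 t2]. unfold N2. simpl.
  rewrite (Series_ext _ (fun n => 1 * nsq a n + ((2*t1) * ipre a b n + ((2 * t2) * ipim a b n + (t1*t1+t2*t2) * nsq b n)))).
  rewrite !Series_lin, Series_scal_l. unfold Cmul, Cconj, Cnorm2, ip; simpl; ring.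
  all: try (repeat (apply ex_series_lin || apply ex_series_scal_r); auto using ex_ipre, ex_ipim).
  intros n. unfold nsq, ipre, ipim, vlin. destruct (a n), (b n). unfold Cnorm2, Cmul, Cadd, Cconj; simpl. ring.
Qed.

Lemma CS x y : inH x -> inH y -> Cnorm2 (ip x y) <= N2 x * N2 y.
Proof.
  intros Hx Hy. pose proof (N2_nonneg x Hx). pose proof (N2_nonneg y Hy).
  destruct (Req_dec (N2 y) 0) as [E|E].
  - rewrite (ip_zero_r x y Hy E), Cnorm2_0, E. lra.
  - assert (Hb : 0 < N2 y) by lra.
    set (z := ip x y). destruct z as [p q] eqn:Ez.
    set (t := (- (p / N2 y), - (q / N2 y)) : C).
    assert (H1 := N2_nonneg (vlin t y x) (inH_lin t y x Hy Hx)).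
    rewrite N2_expand in H1 by auto. fold z in H1. rewrite Ez in H1.
    unfold t, Cmul, Cconj, Cnorm2 in *; simpl in *.
    set (b := N2 y) in *. set (a := N2 x) in *.
    assert (E1 : - (p / b) * p - - - (q / b) * q = - ((p*p+q*q) / b)) by (field; lra).
    assert (E2 : (- (p / b) * - (p / b) + - (q / b) * - (q / b)) * b = (p*p+q*q)/b) by (field; lra).
    rewrite E1 in H1. rewrite E2 in H1.
    assert (0 <= a - (p*p+q*q)/b) by lra.
    assert (H5 : 0 <= (a - (p*p+q*q)/b) * b) by nra.
    replace ((a - (p*p+q*q)/b) * b) with (a*b - (p*p+q*q)) in H5 by (field; lra). lra.
Qed.

Fixpoint csum (m : nat) (h : nat -> C) : C :=
  match m with O => C0 | S m' => Cadd (csum m' h) (h m') end.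

Lemma csum_ext m h k : (forall j, (j < m)%nat -> h j = k j) -> csum m h = csum m k.
Proof. induction m; simpl; intros; auto. rewrite IHm, H; auto. Qed.
Lemma csum_add m h k : csum m (fun j => Cadd (h j) (k j)) = Cadd (csum m h) (csum m k).
Proof. induction m; simpl. ring. rewrite IHm. ring. Qed.
Lemma csum_scal m a h : csum m (fun j => Cmul a (h j)) = Cmul a (csum m h).
Proof. induction m; simpl. ring. rewrite IHm. ring. Qed.
Lemma csum_conj m h : Cconj (csum m h) = csum m (fun j => Cconj (h j)).
Proof. induction m; simpl. apply Cconj_0. rewrite Cconj_add, IHm. auto. Qed.
Lemma csum_fst m h : fst (csum m h) = fsum m (fun j => fst (h j)).
Proof. induction m; simpl; auto. rewrite <- IHm. auto. Qed.
Lemma csum_stable m m' h : (forall n, (m <= n)%nat -> h n = C0) -> (m <= m')%nat ->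
  csum m' h = csum m h.
Proof.
  intros H Hm. induction Hm as [|p Hp IH]; auto. simpl. rewrite IH, H; try lia. ring.
Qed.
Lemma csum_zero m h : (forall n, (n < m)%nat -> h n = C0) -> csum m h = C0.
Proof. induction m; simpl; intros; auto. rewrite IHm, H; auto. ring. Qed.
Lemma csum_delta m i (a : nat -> C) : (i < m)%nat ->
  csum m (fun j => Cmul (a j) (if Nat.eqb j i then C1 else C0)) = a i.
Proof.
  intros Hi. rewrite (csum_stable (S i)).
  - simpl. rewrite Nat.eqb_refl. rewrite csum_zero. ring.
    intros n Hn. destruct (Nat.eqb_spec n i); try lia. ring.
  - intros n Hn. destruct (Nat.eqb_spec n i); try lia. ring.
  - lia.
Qed.
Lemma csum_swap m k (a : nat -> nat -> C) :
  csum m (fun i => csum k (fun j => a i j)) = csum k (fun j => csum m (fun i => a i j)).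
Proof.
  induction m; simpl.
  - rewrite csum_zero; auto.
  - rewrite IHm, csum_add. reflexivity.
Qed.

Definition lincomb (m : nat) (c : nat -> C) (F : nat -> vec) : vec :=
  fun n => csum m (fun j => Cmul (c j) (F j n)).

Lemma lincomb_S m c F : lincomb (S m) c F = vlin (c m) (F m) (lincomb m c F).
Proof. apply functional_extensionality; intro n. unfold lincomb, vlin. simpl. ring. Qed.

Lemma inH_lincomb m c F : (forall j, (j < m)%nat -> inH (F j)) -> inH (lincomb m c F).
Proof.
  induction m; intros H.
  - exact inH_zero.
  - rewrite lincomb_S. apply inH_lin; auto.
Qed.

Lemma ip_zero_l y : ip zerov y = C0.
Proof.
  apply Ceq; simpl; rewrite <- Series_zero; apply Series_ext;
  intros n; unfold ipre, ipim, zerov; unfold Cmul, Cconj, C0; simpl; ring.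
Qed.

Lemma ip_lincomb_l m c F y : (forall j, (j < m)%nat -> inH (F j)) -> inH y ->
  ip (lincomb m c F) y = csum m (fun j => Cmul (c j) (ip (F j) y)).
Proof.
  induction m; intros H Hy.
  - simpl. apply ip_zero_l.
  - rewrite lincomb_S, ip_lin_l; auto. simpl. rewrite IHm; auto. ring.
    apply inH_lincomb; auto.
Qed.

Lemma ip_lincomb_r m c F y : (forall j, (j < m)%nat -> inH (F j)) -> inH y ->
  ip y (lincomb m c F) = csum m (fun j => Cmul (Cconj (c j)) (ip y (F j))).
Proof.
  intros H Hy. rewrite ip_conj, ip_lincomb_l, csum_conj; auto.
  apply csum_ext. intros j Hj. rewrite Cconj_mul, <- ip_conj. auto.
Qed.

Definition orthon (c : nat) (F : nat -> vec) :=
  (forall j, (j < c)%nat -> inH (F j)) /\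
  (forall i j, (i < c)%nat -> (j < c)%nat -> ip (F i) (F j) = if Nat.eqb i j then C1 else C0).

Lemma coef_lincomb c a F i : orthon c F -> (i < c)%nat -> ip (lincomb c a F) (F i) = a i.
Proof.
  intros [H1 H2] Hi. rewrite ip_lincomb_l; auto.
  rewrite (csum_ext _ _ (fun j => Cmul (a j) (if Nat.eqb j i then C1 else C0))).
  apply csum_delta; auto. intros j Hj. rewrite H2; auto.
Qed.

Lemma N2_lincomb c a F : orthon c F -> N2 (lincomb c a F) = fsum c (fun j => Cnorm2 (a j)).
Proof.
  intros HF. destruct HF as [H1 H2].
  assert (E : ip (lincomb c a F) (lincomb c a F) = csum c (fun j => Cmul (a j) (Cconj (a j)))).
  { rewrite ip_lincomb_l; auto. apply csum_ext. intros j Hj. rewrite ip_conj, coef_lincomb; auto.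
    split; auto. apply inH_lincomb; auto. }
  rewrite ip_self in E. apply (f_equal fst) in E. simpl in E. rewrite E, csum_fst.
  apply fsum_ext. intros. rewrite Cmul_conj. reflexivity.
Qed.

Lemma bessel c F y : orthon c F -> inH y -> fsum c (fun j => Cnorm2 (ip y (F j))) <= N2 y.
Proof.
  intros HF Hy. pose proof HF as [H1 H2].
  set (z := lincomb c (fun j => ip y (F j)) F).
  assert (Hz : inH z) by (apply inH_lincomb; auto).
  assert (H := N2_nonneg (vlin (Copp C1) z y) (inH_lin _ _ _ Hz Hy)).
  rewrite N2_expand in H by auto.
  unfold z in H at 2. rewrite N2_lincomb in H by auto.
  unfold z in H. rewrite ip_lincomb_r in H by auto.
  rewrite (csum_ext _ _ (fun j => Creal (Cnorm2 (ip y (F j))))) in H.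
  - assert (E : fst (Cmul (Cconj (Copp C1)) (csum c (fun j => Creal (Cnorm2 (ip y (F j)))))) =
              - fsum c (fun j => Cnorm2 (ip y (F j)))).
    { replace (Cmul (Cconj (Copp C1)) (csum c (fun j => Creal (Cnorm2 (ip y (F j))))))
        with (Copp (csum c (fun j => Creal (Cnorm2 (ip y (F j)))))) by (apply Ceq; unfold Cmul, Copp, Cconj, C1; simpl; ring).
      unfold Copp. simpl. rewrite csum_fst. reflexivity. }
    rewrite E in H. replace (Cnorm2 (Copp C1)) with 1 in H by (unfold Cnorm2, Copp, C1; simpl; ring). lra.
  - intros j Hj. replace (Cmul (Cconj (ip y (F j))) (ip y (F j))) with (Cmul (ip y (F j)) (Cconj (ip y (F j)))) by ring. apply Cmul_conj.
Qed.

Definition spanof (M : nat) (G : nat -> vec) (v : vec) :=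
  exists a, forall n, v n = lincomb M a G n.

Lemma span_ext_v M G v w : (forall n, v n = w n) -> spanof M G v -> spanof M G w.
Proof. intros E [a Ha]. exists a. intros n. rewrite <- E. auto. Qed.

Lemma span_ext_G M G G' v : (forall j, (j < M)%nat -> G j = G' j) -> spanof M G v -> spanof M G' v.
Proof.
  intros E [a Ha]. exists a. intros n. rewrite Ha. unfold lincomb. apply csum_ext.
  intros j Hj. rewrite E; auto.
Qed.

Lemma span_zero M G : spanof M G zerov.
Proof. exists (fun _ => C0). intros n. unfold lincomb, zerov. rewrite csum_zero; auto. intros; ring. Qed.

Lemma span_vlin M G t x y : spanof M G x -> spanof M G y -> spanof M G (vlin t x y).
Proof.
  intros [a Ha] [b Hb]. exists (fun i => Cadd (Cmul t (a i)) (b i)). intros n.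
  unfold vlin. rewrite Ha, Hb. unfold lincomb. rewrite <- csum_scal, <- csum_add.
  apply csum_ext. intros; ring.
Qed.

Lemma span_gen M G i : (i < M)%nat -> spanof M G (G i).
Proof.
  intros Hi. exists (fun j => if Nat.eqb j i then C1 else C0). intros n. unfold lincomb.
  rewrite (csum_ext _ _ (fun j => Cmul (G j n) (if Nat.eqb j i then C1 else C0))).
  rewrite csum_delta; auto. intros j Hj. ring.
Qed.

Lemma span_mono M M' G v : spanof M G v -> (M <= M')%nat -> spanof M' G v.
Proof.
  intros [a Ha] HM. exists (fun j => if Nat.ltb j M then a j else C0). intros n. rewrite Ha.
  unfold lincomb. rewrite (csum_stable M M'); auto.
  - apply csum_ext. intros j Hj. destruct (Nat.ltb_spec j M); try lia. auto.
  - intros j Hj. destruct (Nat.ltb_spec j M); try lia. ring.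
Qed.

Lemma span_lincomb M G c a v : (forall j, (j < c)%nat -> spanof M G (v j)) -> spanof M G (lincomb c a v).
Proof.
  induction c; intros H.
  - apply (span_ext_v _ _ zerov). intros n; reflexivity. apply span_zero.
  - rewrite lincomb_S. apply span_vlin; auto.
Qed.

Lemma inH_span M G v : (forall j, (j < M)%nat -> inH (G j)) -> spanof M G v -> inH v.
Proof.
  intros H [a Ha]. assert (E : v = lincomb M a G) by (apply functional_extensionality; auto).
  rewrite E. apply inH_lincomb; auto.
Qed.

Lemma span_expand c F v : orthon c F -> spanof c F v ->
  forall n, v n = lincomb c (fun j => ip v (F j)) F n.
Proof.
  intros HF [a Ha]. assert (E : v = lincomb c a F) by (apply functional_extensionality; auto).
  subst v. intros n.
  change (csum c (fun j => Cmul (a j) (F j n)) = csum c (fun j => Cmul (ip (lincomb c a F) (F j)) (F j n))).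
  apply csum_ext. intros j Hj. rewrite coef_lincomb; auto.
Qed.

Lemma span_orth c F v i : orthon c F -> spanof c F v -> inH (F i) ->
  (forall j, (j < c)%nat -> ip (F j) (F i) = C0) -> ip v (F i) = C0.
Proof.
  intros HF [a Ha] Hi Hz. assert (E : v = lincomb c a F) by (apply functional_extensionality; auto).
  subst v. rewrite ip_lincomb_l; auto. apply csum_zero. intros j Hj. rewrite Hz; auto. ring.
  apply HF.
Qed.

Definition upd (F : nat -> vec) (c : nat) (v : vec) : nat -> vec :=
  fun j => if Nat.eqb j c then v else F j.
Definition resid c F (y : vec) : vec := vlin (Copp C1) (lincomb c (fun j => ip y (F j)) F) y.
Definition nrmz (r : vec) : vec := vlin (Creal (/ sqrt (N2 r))) r zerov.

Lemma resid_orth c F y i : orthon c F -> inH y -> (i < c)%nat -> ip (resid c F y) (F i) = C0.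
Proof.
  intros HF Hy Hi. unfold resid. rewrite ip_lin_l; auto.
  rewrite coef_lincomb; auto. ring. apply inH_lincomb, HF. apply HF; auto.
Qed.

Lemma inH_resid c F y : orthon c F -> inH y -> inH (resid c F y).
Proof. intros HF Hy. apply inH_lin; auto. apply inH_lincomb, HF. Qed.

Lemma N2_scal s r : inH r -> N2 (vlin s r zerov) = Cnorm2 s * N2 r.
Proof.
  intros Hr. rewrite N2_expand; auto using inH_zero. rewrite ip_zero_l.
  replace (N2 zerov) with 0. replace (Cmul (Cconj s) C0) with C0 by ring. simpl. ring.
  unfold N2. rewrite <- Series_zero. apply Series_ext. intros; unfold nsq, zerov. symmetry; apply Cnorm2_0.
Qed.

Lemma nrmz_N2 r : inH r -> 0 < N2 r -> N2 (nrmz r) = 1.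
Proof.
  intros Hr Hp. unfold nrmz. rewrite N2_scal; auto. unfold Cnorm2, Creal; simpl.
  pose proof (sqrt_lt_R0 _ Hp). pose proof (sqrt_sqrt (N2 r) ltac:(lra)).
  set (N := N2 r) in *. set (s := sqrt N) in *. rewrite <- H0. field. lra.
Qed.

Lemma inH_nrmz r : inH r -> inH (nrmz r).
Proof. intros. apply inH_lin; auto using inH_zero. Qed.

Lemma orthon_step c F r : orthon c F -> inH r -> 0 < N2 r ->
  (forall i, (i < c)%nat -> ip r (F i) = C0) -> orthon (S c) (upd F c (nrmz r)).
Proof.
  intros [H1 H2] Hr Hp Hz.
  assert (Hf : forall i, (i < c)%nat -> ip (nrmz r) (F i) = C0).
  { intros i Hi. unfold nrmz. rewrite ip_lin_l, Hz, ip_zero_l; auto using inH_zero. ring. }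
  split.
  - intros j Hj. unfold upd. destruct (Nat.eqb_spec j c). apply inH_nrmz; auto. apply H1; lia.
  - intros i j Hi Hj. unfold upd.
    destruct (Nat.eqb_spec i c), (Nat.eqb_spec j c); subst.
    + rewrite Nat.eqb_refl, ip_self, nrmz_N2; auto.
    + destruct (Nat.eqb_spec c j); try lia. apply Hf; lia.
    + destruct (Nat.eqb_spec i c); try lia. rewrite ip_conj, Hf, Cconj_0; auto; lia.
    + apply H2; lia.
Qed.

Fixpoint GS (g : nat -> vec) (m : nat) : nat * (nat -> vec) :=
  match m with
  | O => (O, fun _ => zerov)
  | S m' => match GS g m' with (c, F) =>
      if Rlt_dec 0 (N2 (resid c F (g m'))) then (S c, upd F c (nrmz (resid c F (g m')))) else (c, F) end
  end.

Lemma span_self c F a : spanof c F (lincomb c a F).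
Proof. apply span_lincomb. intros; apply span_gen; auto. Qed.

Lemma GS_inv g (Hg : forall i, inH (g i)) m :
  let c := fst (GS g m) in let F := snd (GS g m) in
  orthon c F /\ (forall j, (j < c)%nat -> spanof m g (F j)) /\
  (forall i, (i < m)%nat -> spanof c F (g i)) /\ (c <= m)%nat.
Proof.
  induction m; simpl.
  - split. split; intros; lia. split. intros; lia. split; intros; lia.
  - destruct (GS g m) as [c F]. simpl in IHm. destruct IHm as (HO & HsF & Hsg & Hc).
    set (y := g m). set (a := fun j => ip y (F j)). set (r := resid c F y).
    assert (Hy : inH y) by apply Hg.
    assert (Hr : inH r) by (apply inH_resid; auto).
    assert (Hrs : spanof (S m) g r).
    { unfold r, resid. apply span_vlin. apply span_lincomb. intros j Hj. apply (span_mono m); auto.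
      apply span_gen; auto. }
    assert (Hdec : forall n, y n = Cadd (lincomb c a F n) (r n)).
    { intros n. unfold r, resid, vlin. fold a. ring. }
    destruct (Rlt_dec 0 (N2 r)) as [Hp|Hp]; simpl.
    + set (F' := upd F c (nrmz r)).
      assert (HF'lt : forall j, (j < c)%nat -> F' j = F j).
      { intros j Hj. unfold F', upd. destruct (Nat.eqb_spec j c); try lia; auto. }
      assert (HF'c : F' c = nrmz r) by (unfold F', upd; rewrite Nat.eqb_refl; auto).
      split; [|split; [|split]].
      * apply orthon_step; auto. intros; apply resid_orth; auto.
      * intros j Hj. destruct (Nat.eq_dec j c).
        -- subst j. rewrite HF'c. unfold nrmz. apply span_vlin; auto. apply span_zero.
        -- rewrite HF'lt by lia. apply (span_mono m); auto. apply HsF; lia.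
      * intros i Hi. 
        assert (Hold : spanof (S c) F' (lincomb c a F)).
        { apply (span_mono c). apply (span_ext_G c F). intros; rewrite HF'lt; auto. apply span_self. lia. }
        assert (Hnew : spanof (S c) F' r).
        { apply (span_ext_v _ _ (vlin (Creal (sqrt (N2 r))) (F' c) zerov)).
          - intros n. rewrite HF'c. unfold nrmz, vlin, zerov.
            assert (sqrt (N2 r) <> 0) by (pose proof (sqrt_lt_R0 _ Hp); lra).
            apply Ceq; destruct (r n); unfold Cadd, Cmul, Creal, C0; simpl; field; auto.
          - apply span_vlin. apply span_gen; lia. apply span_zero. }
        destruct (Nat.eq_dec i m).
        -- subst i. apply (span_ext_v _ _ (vlin C1 (lincomb c a F) r)).
           intros n. fold y. rewrite Hdec. unfold vlin. ring.
           apply span_vlin; auto.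
        -- apply (span_mono c). apply (span_ext_G c F). intros; rewrite HF'lt; auto. apply Hsg; lia. lia.
      * lia.
    + assert (Hz : forall n, r n = C0).
      { apply N2_zero; auto. pose proof (N2_nonneg r Hr). lra. }
      split; [|split; [|split]]; auto.
      * intros j Hj. apply (span_mono m); auto.
      * intros i Hi. destruct (Nat.eq_dec i m).
        -- subst i. apply (span_ext_v _ _ (lincomb c a F)). intros n. fold y. rewrite Hdec, Hz. ring.
           apply span_self.
        -- apply Hsg; lia.
Qed.

Lemma GS_step_prefix g m : (fst (GS g m) <= fst (GS g (S m)))%nat /\
  forall j, (j < fst (GS g m))%nat -> snd (GS g (S m)) j = snd (GS g m) j.
Proof.
  simpl. destruct (GS g m) as [c F]. simpl.
  destruct (Rlt_dec _ _); simpl; split; auto.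
  intros j Hj. unfold upd. destruct (Nat.eqb_spec j c); try lia; auto.
Qed.

Lemma GS_prefix g m m' : (m <= m')%nat -> (fst (GS g m) <= fst (GS g m'))%nat /\
  forall j, (j < fst (GS g m))%nat -> snd (GS g m') j = snd (GS g m) j.
Proof.
  intros H. induction H as [|p Hp IH]. split; auto.
  destruct IH as [IH1 IH2]. destruct (GS_step_prefix g p) as [S1 S2]. split. lia.
  intros j Hj. rewrite S2 by lia. auto.
Qed.

Fixpoint allw (d n : nat) : list (list nat) :=
  match n with
  | O => [nil]
  | S n' => flat_map (fun a => map (cons a) (allw d n')) (seq 0 (S d))
  end.

Fixpoint Wk (d k : nat) : list (list nat) :=
  match k with
  | O => allw d 0
  | S k' => Wk d k' ++ allw d (S k')
  end.

Lemma length_flat_map_const (l : list nat) (L : list (list nat)) :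
  length (flat_map (fun a => map (cons a) L) l) = (length l * length L)%nat.
Proof. induction l; simpl; auto. rewrite length_app, length_map, IHl. lia. Qed.

Lemma length_allw d n : length (allw d n) = Nat.pow (S d) n.
Proof.
  induction n; [reflexivity|]. unfold allw; fold allw. rewrite length_flat_map_const, length_seq, IHn. simpl. lia.
Qed.

Lemma length_Wk d k : length (Wk d k) = alpha k d.
Proof. induction k; [reflexivity|]. unfold Wk; fold Wk. rewrite length_app, IHk, length_allw. auto. Qed.

Lemma In_allw d n w : In w (allw d n) <-> length w = n /\ Forall (fun a => (a <= d)%nat) w.
Proof.
  revert w; induction n; intros w.
  - simpl. split. intros [H|[]]; subst; auto. intros [H _]. destruct w; simpl in *; auto; lia.
  - unfold allw; fold allw. rewrite in_flat_map. split.
    + intros [a [Ha Hw]]. apply in_map_iff in Hw. destruct Hw as [w' [E Hw']]. subst w.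
      apply IHn in Hw'. destruct Hw'. apply in_seq in Ha. simpl. split; auto. constructor; auto; lia.
    + intros [Hl HF]. destruct w as [|a w']; simpl in Hl; try lia. inversion HF; subst.
      exists a. split. apply in_seq; lia. apply in_map. apply IHn. split; auto.
Qed.

Lemma In_Wk d k w : In w (Wk d k) <-> (length w <= k)%nat /\ Forall (fun a => (a <= d)%nat) w.
Proof.
  induction k.
  - change (In w (allw d 0) <-> (length w <= 0)%nat /\ Forall (fun a => (a <= d)%nat) w). rewrite In_allw. split; intros [H1 H2]; split; auto; lia.
  - unfold Wk; fold Wk. rewrite in_app_iff, IHk, In_allw. split.
    + intros [[H1 H2]|[H1 H2]]; split; auto; lia.
    + intros [H1 H2]. destruct (Nat.eq_dec (length w) (S k)). right; auto. left; split; auto; lia.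
Qed.

Lemma Wk_prefix d k k' : (k <= k')%nat -> exists l, Wk d k' = Wk d k ++ l.
Proof.
  intros H. induction H as [|p Hp [l IH]]. exists nil. rewrite app_nil_r; auto.
  exists (l ++ allw d (S p)). unfold Wk at 1; fold Wk. rewrite IH, app_assoc. auto.
Qed.

Lemma alpha_ge d k : (S k <= alpha k d)%nat.
Proof.
  induction k; simpl. lia. pose proof (Nat.pow_nonzero (S d) (S k) ltac:(lia)). simpl in *. lia.
Qed.

Lemma alpha_mono d k k' : (k <= k')%nat -> (alpha k d <= alpha k' d)%nat.
Proof. intros H; induction H; simpl; lia. Qed.

Definition word (d i : nat) : list nat := nth i (Wk d i) nil.

Lemma word_spec d k i : (i < alpha k d)%nat -> word d i = nth i (Wk d k) nil.
Proof.
  intros Hi. unfold word.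
  assert (Hn : forall k1 k2, (k1 <= k2)%nat -> (i < alpha k1 d)%nat -> nth i (Wk d k2) nil = nth i (Wk d k1) nil).
  { intros k1 k2 H12 Hlt. destruct (Wk_prefix d k1 k2 H12) as [l E]. rewrite E.
    apply app_nth1. rewrite length_Wk; auto. }
  pose proof (alpha_ge d i).
  rewrite <- (Hn i (max i k)) by (lia || auto). rewrite (Hn k (max i k)); auto; lia.
Qed.

Lemma word_in d k i : (i < alpha k d)%nat -> In (word d i) (Wk d k).
Proof. intros Hi. rewrite (word_spec d k i Hi). apply nth_In. rewrite length_Wk; auto. Qed.

Lemma word_surj d k w : (length w <= k)%nat -> Forall (fun a => (a <= d)%nat) w ->
  exists i, (i < alpha k d)%nat /\ word d i = w.
Proof.
  intros H1 H2. assert (Hin : In w (Wk d k)) by (apply In_Wk; auto).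
  destruct (In_nth _ _ nil Hin) as [i [Hi E]]. rewrite length_Wk in Hi.
  exists i. split; auto. rewrite word_spec with (k := k); auto.
Qed.

Definition gen (d : nat) (X : nat -> op) (i : nat) : vec := weval d X (word d i) e1.

Lemma Vk_to_span d X k v : in_Vk d X k v -> spanof (alpha k d) (gen d X) v.
Proof.
  intros [p [Hp Hv]]. apply (span_ext_v _ _ (peval d X p e1)). intros n; symmetry; auto.
  clear Hv. induction p as [|[c w] p IH].
  - apply (span_ext_v _ _ zerov). intros n; reflexivity. apply span_zero.
  - inversion Hp as [|? ? [Hl HF] Hp']; subst. simpl in Hl, HF.
    apply (span_ext_v _ _ (vlin c (weval d X w e1) (peval d X p e1))). intros n; reflexivity.
    apply span_vlin; auto.
    destruct (word_surj d k w Hl HF) as [i [Hi E]].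
    apply (span_ext_v _ _ (gen d X i)). intros n. unfold gen. rewrite E. auto.
    apply span_gen; auto.
Qed.

Lemma csum_shift M f : csum (S M) f = Cadd (f 0%nat) (csum M (fun j => f (S j))).
Proof.
  induction M; simpl. ring. simpl in IHM. rewrite IHM. ring.
Qed.

Lemma peval_map d X (a : nat -> C) s M n :
  peval d X (map (fun i => (a i, word d i)) (seq s M)) e1 n =
  csum M (fun j => Cmul (a (s + j)%nat) (gen d X (s + j)%nat n)).
Proof.
  revert s; induction M; intros s. reflexivity.
  rewrite csum_shift. simpl. rewrite IHM. rewrite Nat.add_0_r. unfold gen.
  f_equal. apply csum_ext. intros j Hj. rewrite Nat.add_succ_r. reflexivity.
Qed.

Lemma span_to_Vk d X k v : spanof (alpha k d) (gen d X) v -> in_Vk d X k v.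
Proof.
  intros [a Ha]. exists (map (fun i => (a i, word d i)) (seq 0 (alpha k d))). split.
  - unfold poly_in. apply Forall_forall. intros [c w] Hin. apply in_map_iff in Hin.
    destruct Hin as [i [E Hi]]. inversion E; subst. apply in_seq in Hi.
    apply In_Wk. apply word_in. lia.
  - intros n. rewrite peval_map. rewrite Ha. reflexivity.
Qed.

Lemma inH_e1 : inH e1.
Proof.
  exists (fsum 1 (nsq e1)). apply is_series_finite. intros n Hn. unfold nsq, e1.
  destruct n; try lia. simpl. apply Cnorm2_0.
Qed.

Lemma inH_Mshift x : inH x -> inH (Mshift x).
Proof.
  intros H. unfold inH. apply ex_series_incr_1. apply (ex_series_ext (nsq x)); auto.
Qed.

Lemma inH_gen d X : (forall i, (i < d)%nat -> bounded_op (X i)) -> forall i, inH (gen d X i).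
Proof.
  intros HX i. unfold gen. generalize (word d i). intros w. induction w as [|a w IH]; simpl.
  - apply inH_e1.
  - destruct (Nat.ltb_spec a d).
    + apply inH_iff. apply (proj1 (HX a H)). apply inH_iff. auto.
    + apply inH_Mshift; auto.
Qed.

Definition en (k : nat) : vec := fun n => if Nat.eqb n k then C1 else C0.

Lemma fsum_single m k (h : nat -> R) : (k < m)%nat -> (forall n, n <> k -> h n = 0) -> fsum m h = h k.
Proof.
  intros Hk Hz. rewrite (fsum_stable (S k) m); auto; try lia.
  - simpl. rewrite (fsum_ext k h (fun _ => 0)). assert (fsum k (fun _ => 0) = 0) by (clear; induction k; simpl; lra). lra.
    intros; apply Hz; lia.
  - intros n Hn. apply Hz. lia.
Qed.

Lemma ip_en x k : inH x -> ip x (en k) = x k.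
Proof.
  intros Hx. apply Ceq; simpl.
  - rewrite (is_series_unique _ (fsum (S k) (ipre x (en k)))).
    + rewrite (fsum_single (S k) k); try lia. unfold ipre, en. rewrite Nat.eqb_refl. destruct (x k); unfold Cmul, Cconj, C1; simpl; ring.
      intros n Hn. unfold ipre, en. destruct (Nat.eqb_spec n k); try lia. destruct (x n); unfold Cmul, Cconj, C0; simpl; ring.
    + apply is_series_finite. intros n Hn. unfold ipre, en. destruct (Nat.eqb_spec n k); try lia. destruct (x n); unfold Cmul, Cconj, C0; simpl; ring.
  - rewrite (is_series_unique _ (fsum (S k) (ipim x (en k)))).
    + rewrite (fsum_single (S k) k); try lia. unfold ipim, en. rewrite Nat.eqb_refl. destruct (x k); unfold Cmul, Cconj, C1; simpl; ring.
      intros n Hn. unfold ipim, en. destruct (Nat.eqb_spec n k); try lia. destruct (x n); unfold Cmul, Cconj, C0; simpl; ring.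
    + apply is_series_finite. intros n Hn. unfold ipim, en. destruct (Nat.eqb_spec n k); try lia. destruct (x n); unfold Cmul, Cconj, C0; simpl; ring.
Qed.

Lemma inH_en k : inH (en k).
Proof.
  exists (fsum (S k) (nsq (en k))). apply is_series_finite. intros n Hn. unfold nsq, en.
  destruct (Nat.eqb_spec n k); try lia. apply Cnorm2_0.
Qed.

Lemma N2_en k : N2 (en k) = 1.
Proof.
  pose proof (ip_self (en k)) as E. rewrite ip_en in E by apply inH_en.
  assert (Hk : en k k = C1) by (unfold en; rewrite Nat.eqb_refl; auto). rewrite Hk in E. apply (f_equal fst) in E. simpl in E. lra.
Qed.

Lemma weval_repeat d X k : forall n, weval d X (repeat d k) e1 n = en k n.
Proof.
  induction k; intros n; simpl. reflexivity.
  destruct (Nat.ltb_spec d d); try lia. destruct n; simpl. reflexivity. rewrite IHk. reflexivity.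
Qed.

Lemma en_Vk d X k i : (i <= k)%nat -> in_Vk d X k (en i).
Proof.
  intros Hi. exists [(C1, repeat d i)]. split.
  - constructor; [|constructor]. simpl. rewrite repeat_length. split; auto.
    apply Forall_forall. intros a Ha. apply repeat_spec in Ha. lia.
  - intros n. unfold peval. simpl. rewrite weval_repeat. ring.
Qed.

Lemma fsum_const m r : fsum m (fun _ => r) = INR m * r.
Proof. induction m; simpl fsum. simpl; ring. rewrite IHm, S_INR. ring. Qed.

Lemma orthon_restrict c c' F F' : orthon c F -> (c' <= c)%nat -> (forall j, (j < c')%nat -> F' j = F j) ->
  orthon c' F'.
Proof.
  intros [H1 H2] Hc E. split.
  - intros j Hj. rewrite E; auto. apply H1; lia.
  - intros i j Hi Hj. rewrite !E; auto. apply H2; lia.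
Qed.

Lemma orthon_N2 c F j : orthon c F -> (j < c)%nat -> N2 (F j) = 1.
Proof.
  intros [H1 H2] Hj. pose proof (ip_self (F j)) as E. rewrite H2, Nat.eqb_refl in E by auto.
  apply (f_equal fst) in E. simpl in E. lra.
Qed.

Lemma nsq_ext x y n : x n = y n -> nsq x n = nsq y n.
Proof. unfold nsq; intros ->; auto. Qed.

Section Main.
Variable d : nat.
Variable X : nat -> op.
Hypothesis HX : forall i, (i < d)%nat -> bounded_op (X i).

Definition cntm m := fst (GS (gen d X) m).
Definition FFm m := snd (GS (gen d X) m).
Definition ff j := FFm (alpha j d) j.
Definition BB n := cntm (alpha n d).

Lemma Hg : forall i, inH (gen d X i).
Proof. apply inH_gen; auto. Qed.

Lemma inv m : orthon (cntm m) (FFm m) /\ (forall j, (j < cntm m)%nat -> spanof m (gen d X) (FFm m j)) /\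
  (forall i, (i < m)%nat -> spanof (cntm m) (FFm m) (gen d X i)) /\ (cntm m <= m)%nat.
Proof. exact (GS_inv (gen d X) Hg m). Qed.

Lemma prefix m m' : (m <= m')%nat -> (cntm m <= cntm m')%nat /\ forall j, (j < cntm m)%nat -> FFm m' j = FFm m j.
Proof. exact (GS_prefix (gen d X) m m'). Qed.

Lemma span_g_to_F m v : spanof m (gen d X) v -> spanof (cntm m) (FFm m) v.
Proof.
  intros [a Ha]. apply (span_ext_v _ _ (lincomb m a (gen d X))). intros n; symmetry; auto.
  apply span_lincomb. intros j Hj. apply (inv m); auto.
Qed.

Lemma cnt_ge k : (S k <= cntm (alpha k d))%nat.
Proof.
  set (m := alpha k d). set (c := cntm m). set (F := FFm m).
  destruct (inv m) as (HO & _ & _ & _). fold c F in HO.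
  assert (Hi : forall i, (i <= k)%nat -> fsum c (fun j => nsq (F j) i) = 1).
  { intros i Hik. 
    assert (Hs : spanof c F (en i)).
    { apply span_g_to_F. apply Vk_to_span. apply en_Vk. auto. }
    assert (E : en i = lincomb c (fun j => ip (en i) (F j)) F).
    { apply functional_extensionality. apply span_expand; auto. }
    pose proof (N2_en i) as HN. rewrite E, N2_lincomb in HN by auto.
    rewrite <- HN. apply fsum_ext. intros j Hj.
    rewrite ip_conj, Cnorm2_conj, ip_en. reflexivity. apply HO; auto. }
  assert (H1 : INR (S k) = fsum c (fun j => fsum (S k) (nsq (F j)))).
  { rewrite <- fsum_swap. rewrite <- (Rmult_1_r (INR (S k))), <- fsum_const.
    apply fsum_ext. intros i Hi'. symmetry. apply Hi. lia. }
  assert (H2 : fsum c (fun j => fsum (S k) (nsq (F j))) <= fsum c (fun _ => 1)).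
  { apply fsum_le. intros j Hj. rewrite <- (orthon_N2 c F j HO Hj).
    apply psum_le_series. apply nsq_nonneg. apply HO; auto. }
  rewrite fsum_const in H2. apply INR_le. lra.
Qed.

Lemma ff_eq m j : (j < cntm m)%nat -> ff j = FFm m j.
Proof.
  intros Hj. unfold ff. set (M := max m (alpha j d)).
  destruct (prefix (alpha j d) M) as [_ P1]. lia.
  destruct (prefix m M) as [_ P2]. lia.
  rewrite <- P1, <- P2; auto. pose proof (cnt_ge j). lia.
Qed.

Lemma ff_orthon c : orthon c ff.
Proof.
  set (m := alpha c d). pose proof (cnt_ge c). fold m in H.
  apply (orthon_restrict (cntm m) c (FFm m)). apply inv. lia.
  intros j Hj. apply ff_eq. lia.
Qed.

Lemma ff_inH j : inH (ff j).
Proof. apply (ff_orthon (S j)). lia. Qed.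

Lemma ff_ip i j : ip (ff i) (ff j) = if Nat.eqb i j then C1 else C0.
Proof. apply (ff_orthon (S (max i j))); lia. Qed.

Lemma BB_mono n n' : (n <= n')%nat -> (BB n <= BB n')%nat.
Proof. intros H. apply prefix. apply alpha_mono. auto. Qed.

Lemma BB_le n : (BB n <= alpha n d)%nat.
Proof. apply inv. Qed.

Lemma span_Vk_ff k v : in_Vk d X k v -> spanof (BB k) ff v.
Proof.
  intros H. apply (span_ext_G _ (FFm (alpha k d))). intros j Hj. symmetry. apply ff_eq. auto.
  apply span_g_to_F. apply Vk_to_span. auto.
Qed.

Lemma ff_zero n j : (BB n <= j)%nat -> ff j n = C0.
Proof.
  intros Hj. rewrite <- (ip_en (ff j) n) by apply ff_inH.
  rewrite ip_conj. rewrite (span_orth (BB n) ff (en n) j).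
  apply Cconj_0. apply ff_orthon. apply span_Vk_ff. apply en_Vk; auto. apply ff_inH.
  intros j' Hj'. rewrite ff_ip. destruct (Nat.eqb_spec j' j); try lia. auto.
Qed.

Definition uu (x : vec) : vec := fun n => csum (BB n) (fun j => Cmul (x j) (ff j n)).
Definition uus (y : vec) : vec := fun j => ip y (ff j).

Lemma uu_eq_lincomb x n M : (BB n <= M)%nat -> uu x n = lincomb M x ff n.
Proof.
  intros H. unfold uu, lincomb. symmetry. apply csum_stable; auto.
  intros j Hj. rewrite ff_zero; auto. ring.
Qed.

Lemma uu_lin a x y n : uu (vlin a x y) n = Cadd (Cmul a (uu x n)) (uu y n).
Proof.
  unfold uu, vlin. rewrite <- csum_scal, <- csum_add. apply csum_ext. intros; ring.
Qed.

Lemma uu_bound x : inH x -> forall N, fsum N (nsq (uu x)) <= N2 x.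
Proof.
  intros Hx N. set (z := lincomb (BB N) x ff).
  rewrite (fsum_ext N _ (nsq z)).
  - assert (Hz : inH z) by (apply inH_lincomb; intros; apply ff_inH).
    eapply Rle_trans. apply psum_le_series; auto. apply nsq_nonneg.
    change (N2 z <= N2 x). unfold z. rewrite N2_lincomb by apply ff_orthon.
    apply psum_le_series; auto. intros; apply Cnorm2_nonneg.
  - intros n Hn. apply nsq_ext. apply uu_eq_lincomb. apply BB_mono. lia.
Qed.

Lemma uu_inH x : inH x -> inH (uu x).
Proof. intros Hx. apply (ex_series_bounded _ (N2 x)). apply nsq_nonneg. apply uu_bound; auto. Qed.

Lemma uu_N2 x : inH x -> N2 (uu x) <= N2 x.
Proof. intros Hx. apply series_le_bound. apply uu_inH; auto. apply uu_bound; auto. Qed.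

Lemma uus_bound y : inH y -> forall m, fsum m (nsq (uus y)) <= N2 y.
Proof. intros Hy m. apply bessel; auto. apply ff_orthon. Qed.

Lemma uus_inH y : inH y -> inH (uus y).
Proof. intros Hy. apply (ex_series_bounded _ (N2 y)). apply nsq_nonneg. apply uus_bound; auto. Qed.

Lemma uus_N2 y : inH y -> N2 (uus y) <= N2 y.
Proof. intros Hy. apply series_le_bound. apply uus_inH; auto. apply uus_bound; auto. Qed.

Definition truncv (m : nat) (x : vec) : vec := fun j => if Nat.ltb j m then x j else C0.
Definition tailv (m : nat) (x : vec) : vec := fun j => if Nat.ltb j m then C0 else x j.

Lemma inH_truncv m x : inH x -> inH (truncv m x).
Proof.
  intros Hx. apply (ex_series_bound _ (nsq x)); auto. intros n. unfold nsq, truncv.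
  rewrite Rabs_pos_eq by apply Cnorm2_nonneg. destruct (Nat.ltb n m). lra. rewrite Cnorm2_0. apply Cnorm2_nonneg.
Qed.
Lemma inH_tailv m x : inH x -> inH (tailv m x).
Proof.
  intros Hx. apply (ex_series_bound _ (nsq x)); auto. intros n. unfold nsq, tailv.
  rewrite Rabs_pos_eq by apply Cnorm2_nonneg. destruct (Nat.ltb n m). rewrite Cnorm2_0. apply Cnorm2_nonneg. lra.
Qed.

Lemma N2_tailv m x : inH x -> N2 (tailv m x) = N2 x - fsum m (nsq x).
Proof.
  intros Hx. unfold N2.
  rewrite (Series_ext _ (fun n => (-1) * nsq (truncv m x) n + nsq x n)).
  - rewrite Series_lin; auto. 2: apply inH_truncv; auto.
    rewrite (is_series_unique _ (fsum m (nsq (truncv m x)))).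
    rewrite (fsum_ext m _ (nsq x)). ring.
    intros n Hn. unfold nsq, truncv. destruct (Nat.ltb_spec n m); try lia; auto.
    apply is_series_finite. intros n Hn. unfold nsq, truncv. destruct (Nat.ltb_spec n m); try lia. apply Cnorm2_0.
  - intros n. unfold nsq, truncv, tailv. destruct (Nat.ltb n m); rewrite ?Cnorm2_0; ring.
Qed.

Lemma uu_split m x n : uu x n = Cadd (Cmul C1 (uu (truncv m x) n)) (uu (tailv m x) n).
Proof.
  unfold uu. rewrite <- csum_scal, <- csum_add. apply csum_ext. intros j Hj.
  unfold truncv, tailv. destruct (Nat.ltb j m); ring.
Qed.

Lemma uu_truncv m x n : uu (truncv m x) n = lincomb m x ff n.
Proof.
  rewrite (uu_eq_lincomb _ n (BB n + m)) by lia. unfold lincomb.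
  rewrite (csum_stable m (BB n + m)); try lia.
  - apply csum_ext. intros j Hj. unfold truncv. destruct (Nat.ltb_spec j m); try lia. auto.
  - intros j Hj. unfold truncv. destruct (Nat.ltb_spec j m); try lia. ring.
Qed.

Lemma Cnorm2_small (z : C) : (forall eps, 0 < eps -> Cnorm2 z <= eps) -> z = C0.
Proof.
  intros H. apply Cnorm2_eq0. pose proof (Cnorm2_nonneg z).
  destruct (Req_dec (Cnorm2 z) 0); auto. specialize (H (Cnorm2 z / 2) ltac:(lra)). lra.
Qed.

Lemma uus_uu x j : inH x -> uus (uu x) j = x j.
Proof.
  intros Hx. unfold uus.
  assert (Hd : Csub (ip (uu x) (ff j)) (x j) = C0).
  { apply Cnorm2_small. intros eps Heps.
    destruct (series_tail (nsq x) eps Hx Heps) as [m0 Hm0].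
    set (m := max m0 (S j)).
    assert (Htail : N2 (tailv m x) < eps).
    { rewrite N2_tailv; auto. specialize (Hm0 m ltac:(lia)). apply Rabs_def2 in Hm0. unfold N2. lra. }
    assert (E : uu x = vlin C1 (uu (truncv m x)) (uu (tailv m x))).
    { apply functional_extensionality. intros n. apply uu_split. }
    assert (E2 : uu (truncv m x) = lincomb m x ff).
    { apply functional_extensionality. intros n. apply uu_truncv. }
    rewrite E, ip_lin_l; try apply uu_inH; try apply inH_truncv; try apply inH_tailv; auto; try apply ff_inH.
    rewrite E2, coef_lincomb; try apply ff_orthon; try lia.
    replace (Csub (Cadd (Cmul C1 (x j)) (ip (uu (tailv m x)) (ff j))) (x j)) with (ip (uu (tailv m x)) (ff j)) by ring.
    eapply Rle_trans. apply CS. apply uu_inH, inH_tailv; auto. apply ff_inH.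
    rewrite (orthon_N2 (S j) ff j); try apply ff_orthon; try lia.
    pose proof (uu_N2 (tailv m x) (inH_tailv m x Hx)). lra. }
  replace (ip (uu x) (ff j)) with (Cadd (Csub (ip (uu x) (ff j)) (x j)) (x j)) by ring.
  rewrite Hd. ring.
Qed.

Lemma uu_uus y n : inH y -> uu (uus y) n = y n.
Proof.
  intros Hy. rewrite <- (ip_en y n) by auto.
  assert (E : en n = lincomb (BB n) (fun j => ip (en n) (ff j)) ff).
  { apply functional_extensionality. apply span_expand. apply ff_orthon. apply span_Vk_ff. apply en_Vk; auto. }
  rewrite E. rewrite ip_lincomb_r; auto. 2: intros; apply ff_inH.
  unfold uu, uus. apply csum_ext. intros j Hj. rewrite <- ip_conj, ip_en by apply ff_inH. ring.
Qed.

Lemma uu_iso x : inH x -> N2 (uu x) = N2 x.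
Proof.
  intros Hx. apply Rle_antisym. apply uu_N2; auto.
  assert (E : uus (uu x) = x) by (apply functional_extensionality; intros; apply uus_uu; auto).
  rewrite <- E at 1. apply uus_N2. apply uu_inH; auto.
Qed.

Lemma uu_ip x w : inH x -> inH w -> ip (uu x) (uu w) = ip x w.
Proof.
  intros Hx Hw.
  assert (Ht : forall t, fst (Cmul (Cconj t) (ip (uu x) (uu w))) = fst (Cmul (Cconj t) (ip x w))).
  { intros t. assert (E : uu (vlin t w x) = vlin t (uu w) (uu x)).
    { apply functional_extensionality. intros n. apply uu_lin. }
    pose proof (uu_iso (vlin t w x) (inH_lin _ _ _ Hw Hx)) as H. rewrite E in H.
    rewrite !N2_expand in H; try apply uu_inH; auto. rewrite !uu_iso in H; auto. lra. }
  pose proof (Ht C1) as H1. pose proof (Ht Ci) as H2.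
  destruct (ip (uu x) (uu w)) as [a b], (ip x w) as [c e].
  unfold Cmul, Cconj, C1, Ci in H1, H2; simpl in H1, H2. apply Ceq; simpl; lra.
Qed.

Lemma norm2_sum_N2 x s : norm2_sum x s -> s = N2 x.
Proof. intros H. apply is_series_Reals in H. symmetry. apply is_series_unique. exact H. Qed.

Lemma uu_bounded : bounded_op uu.
Proof.
  split; [|split].
  - intros x Hx. apply inH_iff. apply uu_inH. apply inH_iff; auto.
  - intros a x y Hx Hy n. apply (uu_lin a x y n).
  - exists 1. intros x s t Hx Hs Ht. apply norm2_sum_N2 in Hs. apply norm2_sum_N2 in Ht. subst.
    pose proof (uu_N2 x (proj1 (inH_iff x) Hx)). lra.
Qed.

Lemma uus_bounded : bounded_op uus.
Proof.
  split; [|split].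
  - intros x Hx. apply inH_iff. apply uus_inH. apply inH_iff; auto.
  - intros a x y Hx Hy n. unfold uus. apply inH_iff in Hx. apply inH_iff in Hy.
    apply (ip_lin_l a x y (ff n)); auto. apply ff_inH.
  - exists 1. intros x s t Hx Hs Ht. apply norm2_sum_N2 in Hs. apply norm2_sum_N2 in Ht. subst.
    pose proof (uus_N2 x (proj1 (inH_iff x) Hx)). lra.
Qed.

Lemma uu_unitary : unitary uu uus.
Proof.
  split; [split; [|split]|split].
  - apply uu_bounded.
  - apply uus_bounded.
  - intros x y z Hx Hy. apply inH_iff in Hx. apply inH_iff in Hy.
    assert (E : ip (uu x) y = ip x (uus y)).
    { assert (Ey : y = uu (uus y)) by (apply functional_extensionality; intros; symmetry; apply uu_uus; auto).
      rewrite Ey at 1. apply uu_ip; auto. apply uus_inH; auto. }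
    split; intros H; apply inner_unique in H; subst z.
    + rewrite E. apply ip_inner; auto. apply uus_inH; auto.
    + rewrite <- E. apply ip_inner; auto. apply uu_inH; auto.
  - intros x Hx n. apply uu_uus. apply inH_iff; auto.
  - intros x Hx n. apply uus_uu. apply inH_iff; auto.
Qed.

Lemma uu_part1 k x : in_span_e (S k) x -> in_Vk d X k (uu x).
Proof.
  intros Hx. apply span_to_Vk.
  apply (span_ext_v _ _ (lincomb (S k) x ff)).
  - intros n. rewrite (uu_eq_lincomb x n (BB n + S k)) by lia. unfold lincomb.
    symmetry. apply csum_stable; try lia. intros j Hj. rewrite Hx by lia. ring.
  - apply span_lincomb. intros j Hj. rewrite (ff_eq (alpha k d)). apply inv.
    pose proof (cnt_ge k). lia. pose proof (cnt_ge k). lia.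
Qed.

Lemma uu_part2 k v : in_Vk d X k v -> in_span_e (alpha k d) (uus v).
Proof.
  intros Hv n Hn. unfold uus. apply (span_orth (BB k) ff v n).
  apply ff_orthon. apply span_Vk_ff; auto. apply ff_inH.
  intros j Hj. rewrite ff_ip. pose proof (BB_le k). destruct (Nat.eqb_spec j n); try lia. auto.
Qed.
End Main.

Theorem mainTheorem15 :
  forall (d : nat) (X : nat -> op),
    (forall i, (i < d)%nat -> bounded_op (X i)) ->
    exists u us : op,
      unitary u us /\
      forall k : nat,
        (forall x, in_span_e (S k) x -> in_Vk d X k (u x)) /\
        (forall v, in_Vk d X k v -> in_span_e (alpha k d) (us v)).
Proof.
  intros d X HX. exists (uu d X), (uus d X). split.
  - apply uu_unitary; auto.
  - intros k. split.
    + intros x Hx. apply uu_part1; auto.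
    + intros v Hv. apply uu_part2; auto.
Qed.
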